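(* Let $\mathsf H$ be a Hilbert space. Every $2\times2$ submagic matrix with entries projections on $\mathsf H$ can be completed to a $4\times4$ magic matrix of projections on $\mathsf H$ (i.e. one whose upper-left $2\times2$ block is the given matrix). However, there exist $2\times2$ submagic matrices that cannot be completed to a $3\times3$ magic matrix.
   Context: A submagic matrix is a square matrix whose entries are orthogonal projections, pairwise orthogonal within each row and within each column; it is magic if in addition the entries of each row and each column sum to $1$. *)

(* Defs.v *)
From mathcomp Require Import all_boot all_order all_algebra.
From mathcomp Require Import complex.
From mathcomp Require Import reals.
Set Implicit Arguments. Unset Strict Implicit. Unset Printing Implicit Defensive.
Import Order.TTheory GRing.Theory Num.Theory.
Local Open Scope ring_scope.

Section Hilbert.
Variables (R : realType) (V : lmodType R[i]).

Definition inner_product (ip : V -> V -> R[i]) : Prop :=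
  [/\ (forall (a : R[i]) (x y z : V), ip (a *: x + y) z = a * ip x z + ip y z),
      (forall x y : V, ip y x = (ip x y)^*),
      (forall x : V, 0 <= ip x x) &
      (forall x : V, ip x x = 0 -> x = 0)].

(* Completeness of V for the norm ||x|| = sqrt <x,x>, phrased with squared
   norms: every Cauchy sequence converges. *)
Definition ip_complete (ip : V -> V -> R[i]) : Prop :=
  forall u : nat -> V,
    (forall e : R[i], 0 < e -> exists N : nat, forall m n : nat,
        (N <= m)%N -> (N <= n)%N -> ip (u m - u n) (u m - u n) < e) ->
    exists l : V, forall e : R[i], 0 < e -> exists N : nat, forall n : nat,
        (N <= n)%N -> ip (u n - l) (u n - l) < e.

Definition hilbert_space (ip : V -> V -> R[i]) : Prop :=
  inner_product ip /\ ip_complete ip.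

Definition orth_projection (ip : V -> V -> R[i]) (P : V -> V) : Prop :=
  [/\ (forall (a : R[i]) (x y : V), P (a *: x + y) = a *: P x + P y),
      (forall x : V, P (P x) = P x) &
      (forall x y : V, ip (P x) y = ip x (P y))].

Definition submagic (ip : V -> V -> R[i]) (n : nat)
    (Q : 'I_n -> 'I_n -> V -> V) : Prop :=
  [/\ (forall i j, orth_projection ip (Q i j)),
      (forall i j k, j != k -> forall x, Q i j (Q i k x) = 0) &
      (forall i j k, i != k -> forall x, Q i j (Q k j x) = 0)].

Definition magic (ip : V -> V -> R[i]) (n : nat)
    (Q : 'I_n -> 'I_n -> V -> V) : Prop :=
  [/\ submagic ip Q,
      (forall i x, \sum_(j < n) Q i j x = x) &
      (forall j x, \sum_(i < n) Q i j x = x)].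

Definition completes (ip : V -> V -> R[i]) (n m : nat) (Hnm : (n <= m)%N)
    (P : 'I_n -> 'I_n -> V -> V) (Q : 'I_m -> 'I_m -> V -> V) : Prop :=
  magic ip Q /\
  forall (i j : 'I_n) (x : V), Q (widen_ord Hnm i) (widen_ord Hnm j) x = P i j x.

End Hilbert.

(* Main.v *)
Require Import Defs.
From mathcomp Require Import all_boot all_order all_algebra.
From mathcomp Require Import complex.
From mathcomp Require Import reals.
Import Order.TTheory GRing.Theory Num.Theory.
Local Open Scope ring_scope.

Set Implicit Arguments. Unset Strict Implicit.
Local Open Scope ring_scope.

Definition linop (R : realType) (V : lmodType R[i]) (p : V -> V) :=
  forall (a : R[i]) (x y : V), p (a *: x + y) = a *: p x + p y.

Lemma lin0 (R : realType) (V : lmodType R[i]) (p : V -> V) : linop p -> p 0 = 0.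
Proof.
move=> H; have h := H 1 0 0; rewrite !scale1r addr0 in h.
have : p 0 - p 0 = p 0 + p 0 - p 0 by rewrite -h.
by rewrite subrr addrK => <-.
Qed.

Lemma linD (R : realType) (V : lmodType R[i]) (p : V -> V) x y : linop p -> p (x + y) = p x + p y.
Proof. by move=> H; have := H 1 x y; rewrite !scale1r => ->. Qed.

Lemma linN (R : realType) (V : lmodType R[i]) (p : V -> V) x : linop p -> p (- x) = - p x.
Proof. by move=> H; have := H (-1) x 0; rewrite !scaleN1r addr0 (lin0 H) addr0 => ->. Qed.

Lemma linB (R : realType) (V : lmodType R[i]) (p : V -> V) x y : linop p -> p (x - y) = p x - p y.
Proof. by move=> H; rewrite linD // linN. Qed.

Definition cmp (R : realType) (V : lmodType R[i]) (p q : V -> V) := fun x => x - p x - q x.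

Lemma cmp_lin (R : realType) (V : lmodType R[i]) (p q : V -> V) :
  linop p -> linop q -> linop (cmp p q).
Proof.
move=> Hp Hq a x y; rewrite /cmp Hp Hq !scalerBr.
rewrite !opprD !addrA; congr (_ + _).
rewrite -!addrA; congr (_ + _); rewrite addrC -!addrA; congr (_ + _).
by rewrite addrC -!addrA; congr (_ + _); rewrite addrC.
Qed.

Section S.
Variables (R : realType) (V : lmodType R[i]) (p q : V -> V).
Hypotheses (Hp : linop p) (Hq : linop q) (Ip : forall x, p (p x) = p x)
  (Iq : forall x, q (q x) = q x) (Opq : forall x, p (q x) = 0) (Oqp : forall x, q (p x) = 0).
Lemma cmp_l1 x : p (cmp p q x) = 0.
Proof. by rewrite /cmp !linB // Ip Opq subrr subr0. Qed.
Lemma cmp_l2 x : q (cmp p q x) = 0.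
Proof. by rewrite /cmp !linB // Iq Oqp subr0 subrr. Qed.
Lemma cmp_r1 x : cmp p q (p x) = 0.
Proof. by rewrite /cmp Ip Oqp subrr subr0. Qed.
Lemma cmp_r2 x : cmp p q (q x) = 0.
Proof. by rewrite /cmp Iq Opq subr0 subrr. Qed.
Lemma cmp_idem x : cmp p q (cmp p q x) = cmp p q x.
Proof. by rewrite {1}/cmp cmp_l1 cmp_l2 !subr0. Qed.
End S.

Section IP.
Variables (R : realType) (V : lmodType R[i]) (ip : V -> V -> R[i]).
Hypothesis Hip : inner_product ip.

Lemma ipDl u w z : ip (u + w) z = ip u z + ip w z.
Proof. by case: Hip => H _ _ _; rewrite -{1}(scale1r u) H mul1r. Qed.
Lemma ip0l z : ip 0 z = 0.
Proof.
have := ipDl 0 0 z; rewrite addr0 => h.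
have : ip 0 z - ip 0 z = ip 0 z + ip 0 z - ip 0 z by rewrite -h.
by rewrite subrr addrK => <-.
Qed.
Lemma ipNl u z : ip (- u) z = - ip u z.
Proof. by case: Hip => H _ _ _; rewrite -(addr0 (- u)) -scaleN1r H ip0l addr0 mulN1r. Qed.
Lemma ipDr u w z : ip z (u + w) = ip z u + ip z w.
Proof. by case: Hip => _ H _ _; rewrite (H (u+w) z) (H u z) (H w z) ipDl rmorphD. Qed.
Lemma ipNr u z : ip z (- u) = - ip z u.
Proof. by case: Hip => _ H _ _; rewrite (H (-u) z) (H u z) ipNl rmorphN. Qed.
Lemma ip0r z : ip z 0 = 0.
Proof. by case: Hip => _ H _ _; rewrite (H 0 z) ip0l rmorph0. Qed.

Lemma adj_zero (p q : V -> V) :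
  (forall x y, ip (p x) y = ip x (p y)) -> (forall x y, ip (q x) y = ip x (q y)) ->
  (forall x, p (q x) = 0) -> forall x, q (p x) = 0.
Proof.
move=> Sp Sq O x; case: Hip => _ _ _ H; apply: H.
by rewrite Sq Sp O ip0r.
Qed.

Lemma cmp_sa (p q : V -> V) :
  (forall x y, ip (p x) y = ip x (p y)) -> (forall x y, ip (q x) y = ip x (q y)) ->
  forall x y, ip (cmp p q x) y = ip x (cmp p q y).
Proof.
by move=> Sp Sq x y; rewrite /cmp !ipDl !ipDr !ipNl !ipNr Sp Sq.
Qed.

Lemma zero_op : orth_projection ip (fun _ : V => 0).
Proof. by split=> [a x y|x|x y]; rewrite ?scaler0 ?addr0 ?ip0l ?ip0r. Qed.
End IP.

Lemma cmp_proj (R : realType) (V : lmodType R[i]) (ip : V -> V -> R[i]) (p q : V -> V) :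
  inner_product ip -> orth_projection ip p -> orth_projection ip q ->
  (forall x, p (q x) = 0) -> (forall x, q (p x) = 0) -> orth_projection ip (cmp p q).
Proof.
move=> Hip [Lp Ip Sp] [Lq Iq Sq] O1 O2; split.
- exact: cmp_lin.
- exact: cmp_idem.
- exact: cmp_sa.
Qed.

Lemma cmp0 (R : realType) (V : lmodType R[i]) (p q : V -> V) :
  linop p -> linop q -> cmp p q 0 = 0.
Proof. by move=> Hp Hq; rewrite /cmp (lin0 Hp) (lin0 Hq) !subr0. Qed.

Lemma L1 (V : zmodType) (x u w : V) : x - u - w + (u + w) = x.
Proof. by rewrite -(addrA x) -opprD subrK. Qed.
Lemma L2 (V : zmodType) (x u w : V) : u + (w + (x - u - w)) = x.
Proof. by rewrite addrA addrC L1. Qed.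

Definition Z0 (R : realType) (V : lmodType R[i]) : V -> V := fun _ => 0.

Definition mk4 (R : realType) (V : lmodType R[i]) (a b c d : V -> V) : 'I_4 -> 'I_4 -> V -> V :=
  fun i j => nth (@Z0 R V) (nth [::]
    [:: [:: a; b; cmp a b; @Z0 R V]; [:: c; d; @Z0 R V; cmp c d];
        [:: cmp a c; @Z0 R V; a; c]; [:: @Z0 R V; cmp b d; b; d]] i) j.

Theorem part1 (R : realType) (V : lmodType R[i]) (ip : V -> V -> R[i])
    (HV : hilbert_space ip) :
  (forall P : 'I_2 -> 'I_2 -> V -> V, submagic ip P ->
     exists Q : 'I_4 -> 'I_4 -> V -> V, completes ip (isT : (2 <= 4)%N) P Q).
Proof.
case: HV => Hip _ P [Hpr Hrow Hcol].
pose a := P ord0 ord0; pose b := P ord0 ord_max; pose c := P ord_max ord0; pose d := P ord_max ord_max.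
have ab : forall x, a (b x) = 0 by exact: Hrow.
have ba : forall x, b (a x) = 0 by exact: Hrow.
have cd : forall x, c (d x) = 0 by exact: Hrow.
have dc : forall x, d (c x) = 0 by exact: Hrow.
have ac : forall x, a (c x) = 0 by exact: Hcol.
have ca : forall x, c (a x) = 0 by exact: Hcol.
have bd : forall x, b (d x) = 0 by exact: Hcol.
have db : forall x, d (b x) = 0 by exact: Hcol.
have [La Ia Sa] := Hpr ord0 ord0; have [Lb Ib Sb] := Hpr ord0 ord_max.
have [Lc Ic Sc] := Hpr ord_max ord0; have [Ld Id Sd] := Hpr ord_max ord_max.
have a0 : a 0 = 0 := lin0 La. have b0 : b 0 = 0 := lin0 Lb.
have c0 : c 0 = 0 := lin0 Lc. have d0 : d 0 = 0 := lin0 Ld.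
exists (mk4 a b c d); split; last first.
  by move=> [[|[|i]] Hi] [[|[|j]] Hj] x //=; congr P; apply/val_inj.
split; first split.
- move=> [[|[|[|[|i]]]] Hi] [[|[|[|[|j]]]] Hj] //=; rewrite /mk4 /=.
  all: try exact: zero_op.
  all: try exact: Hpr.
  all: try first [exact: (cmp_proj Hip (Hpr _ _) (Hpr _ _) ab ba) | exact: (cmp_proj Hip (Hpr _ _) (Hpr _ _) cd dc) | exact: (cmp_proj Hip (Hpr _ _) (Hpr _ _) ac ca) | exact: (cmp_proj Hip (Hpr _ _) (Hpr _ _) bd db)].
- move=> [[|[|[|[|i]]]] Hi] [[|[|[|[|j]]]] Hj] [[|[|[|[|k]]]] Hk] //= _ x; rewrite /mk4 /=.
  all: rewrite /Z0 ?a0 ?b0 ?c0 ?d0.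
  all: rewrite ?ab ?ba ?cd ?dc ?ac ?ca ?bd ?db ?cmp0 ?cmp_l1 ?cmp_l2 ?cmp_r1 ?cmp_r2 //.
- move=> [[|[|[|[|i]]]] Hi] [[|[|[|[|j]]]] Hj] [[|[|[|[|k]]]] Hk] //= _ x; rewrite /mk4 /=.
  all: rewrite /Z0 ?a0 ?b0 ?c0 ?d0.
  all: rewrite ?ab ?ba ?cd ?dc ?ac ?ca ?bd ?db ?cmp0 ?cmp_l1 ?cmp_l2 ?cmp_r1 ?cmp_r2 //.
- move=> [[|[|[|[|i]]]] Hi] x //=; rewrite !big_ord_recl big_ord0 /mk4 /= /Z0 /cmp.
  all: rewrite ?addr0 ?add0r.
  all: try by rewrite ?L1 ?L2.

- move=> [[|[|[|[|i]]]] Hi] x //=; rewrite !big_ord_recl big_ord0 /mk4 /= /Z0 /cmp.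
  all: rewrite ?addr0 ?add0r.
  all: by rewrite ?L1 ?L2.
Qed.

Theorem part2 (R : realType) (V : lmodType R[i]) (ip : V -> V -> R[i])
    (HV : hilbert_space ip) :
  ((exists v : V, v != 0) ->
     exists P : 'I_2 -> 'I_2 -> V -> V, submagic ip P /\
       ~ exists Q : 'I_3 -> 'I_3 -> V -> V, completes ip (isT : (2 <= 3)%N) P Q).
Proof.
case: HV => Hip _ [v Hv]; exists (fun _ _ => @Z0 R V); split.
  split=> [i j|i j k _ x|i j k _ x]; [exact: zero_op|by []|by []].
move=> [Q [[[Hpr Hrow Hcol] Hr Hc] Hw]].
have w : forall (i j : 'I_3) x, (i < 2)%N -> (j < 2)%N -> Q i j x = 0.
  move=> i j x hi hj; rewrite -[RHS](Hw (Ordinal hi) (Ordinal hj) x).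
  by congr Q; apply/val_inj.
pose o0 : 'I_3 := Ordinal (isT : (0 < 3)%N).
pose o1 : 'I_3 := Ordinal (isT : (1 < 3)%N).
pose o2 : 'I_3 := Ordinal (isT : (2 < 3)%N).
have e2 : lift ord0 (lift ord0 ord0) = o2 by apply/val_inj.
have r0 : Q o0 o2 v = v.
  by have := Hr o0 v; rewrite !big_ord_recl big_ord0 w // w // add0r add0r addr0 e2.
have r1 : Q o1 o2 v = v.
  by have := Hr o1 v; rewrite !big_ord_recl big_ord0 w // w // add0r add0r addr0 e2.
have := Hcol o0 o2 o1 isT v; rewrite r1 r0 => /eqP; by rewrite (negbTE Hv).
Qed.

Theorem proposition3p5 (R : realType) (V : lmodType R[i]) (ip : V -> V -> R[i])
    (HV : hilbert_space ip) :
  (forall P : 'I_2 -> 'I_2 -> V -> V, submagic ip P ->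
     exists Q : 'I_4 -> 'I_4 -> V -> V, completes ip (isT : (2 <= 4)%N) P Q)
  /\
  ((exists v : V, v != 0) ->
     exists P : 'I_2 -> 'I_2 -> V -> V, submagic ip P /\
       ~ exists Q : 'I_3 -> 'I_3 -> V -> V, completes ip (isT : (2 <= 3)%N) P Q).
Proof.
split; [exact: part1 | exact: part2].
Qed.
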